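(* Let $P$ be a finite poset and $t\geq 2$ a fixed integer. Then either $\mathrm{sat}^{\star}([t]^n,P)=O(1)$ as $n\to\infty$, or $\mathrm{sat}^{\star}([t]^n,P)\geq\log_t(n)$ for all $n$.
   Context: For positive integers $n,t$, $[n]=\{1,\dots,n\}$ and the hypergrid $[t]^n$ is the set of functions $f:[n]\to[t]$, partially ordered by $f\leq g$ iff $f(i)\leq g(i)$ for all $i\in[n]$. An induced copy of a poset $P$ in a family $\mathcal{F}\subseteq[t]^n$ is an injective map $\phi:P\to\mathcal{F}$ such that $\phi(x)\leq\phi(y)$ iff $x\leq_P y$. A family $\mathcal{F}\subseteq[t]^n$ is induced $P$-free if it contains no induced copy of $P$; it is induced $P$-saturated if it is induced $P$-free and for every $f\in[t]^n\setminus\mathcal{F}$ the family $\mathcal{F}\cup\{f\}$ contains an induced copy of $P$. Whenever $P$ embeds as an induced subposet of $[t]^n$, $\mathrm{sat}^{\star}([t]^n,P)$ denotes the minimum size of an induced $P$-saturated family in $[t]^n$. *)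

(* Defs.v *)
From HB Require Import structures.
From mathcomp Require Import all_boot all_order.
From Stdlib Require Import Reals.
Set Implicit Arguments. Unset Strict Implicit. Unset Printing Implicit Defensive.

(* The hypergrid [t]^n : functions [n] -> [t]; we use 'I_n = {0..n-1} and
   'I_t = {0..t-1} in place of {1..n}, {1..t} (order-isomorphic relabeling). *)
Definition grid (t n : nat) := {ffun 'I_n -> 'I_t}.

Definition grid_le (t n : nat) (f g : grid t n) : bool :=
  [forall i, (f i <= g i)%N].

Definition has_induced_copy (d : Order.disp_t) (P : finPOrderType d)
    (t n : nat) (F : {set grid t n}) : Prop :=
  exists phi : P -> grid t n,
    [/\ injective phi,
        (forall x, phi x \in F) &
        (forall x y, grid_le (phi x) (phi y) = (x <= y)%O)].

Definition embeds (d : Order.disp_t) (P : finPOrderType d) (t n : nat) : Prop :=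
  has_induced_copy P [set: grid t n].

Definition induced_free (d : Order.disp_t) (P : finPOrderType d)
    (t n : nat) (F : {set grid t n}) : Prop :=
  ~ has_induced_copy P F.

Definition induced_saturated (d : Order.disp_t) (P : finPOrderType d)
    (t n : nat) (F : {set grid t n}) : Prop :=
  induced_free P F /\
  (forall f : grid t n, f \notin F -> has_induced_copy P (f |: F)).

(* is_satstar P t n m : m = sat^*([t]^n, P), i.e. m is the minimum size of
   an induced P-saturated family in [t]^n (only meaningful when it exists). *)
Definition is_satstar (d : Order.disp_t) (P : finPOrderType d)
    (t n m : nat) : Prop :=
  (exists F : {set grid t n}, induced_saturated P F /\ #|F| = m) /\
  (forall F : {set grid t n}, induced_saturated P F -> (m <= #|F|)%N).

(* Main.v *)
Require Import Defs.
From HB Require Import structures.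
From mathcomp Require Import all_boot all_order.
Set Implicit Arguments. Unset Strict Implicit. Unset Printing Implicit Defensive.

Lemma copy_inj (d : Order.disp_t) (P : finPOrderType d) t n (phi : P -> grid t n) :
  (forall x y, grid_le (phi x) (phi y) = (x <= y)%O) -> injective phi.
Proof.
move=> H x y e; apply/Order.POrderTheory.le_anti.
by rewrite -!H e /grid_le; apply/andP; split; apply/forallP => k.
Qed.

Section Dup.
Variables (d : Order.disp_t) (P : finPOrderType d) (t n N : nat).
Variables (F : {set grid t n}) (i j : 'I_n).
Hypotheses (nij : i != j) (hnN : (n <= N)%N) (tw : forall f, f \in F -> f i = f j).
Hypothesis (sat : induced_saturated P F).

Definition sg (p : 'I_N) : 'I_n := insubd i (val p).
Definition wd (l : 'I_n) : 'I_N := widen_ord hnN l.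

Lemma sg_wd l : sg (wd l) = l.
Proof. by apply: val_inj; rewrite /sg val_insubd /= ltn_ord. Qed.

Lemma wd_sg p : sg p != i -> wd (sg p) = p.
Proof.
move=> h; apply: val_inj; rewrite /= /sg val_insubd; case: ifP => // hp.
by case/eqP: h; apply: val_inj; rewrite /sg val_insubd hp.
Qed.

Definition L (f : grid t n) : grid t N := [ffun p => f (sg p)].
Definition R (g : grid t N) : grid t n := [ffun l => g (wd l)].

Lemma RL f : R (L f) = f.
Proof. by apply/ffunP => l; rewrite !ffunE sg_wd. Qed.

Lemma L_le f f' : grid_le (L f) (L f') = grid_le f f'.
Proof.
apply/forallP/forallP => H l.
  by have := H (wd l); rewrite !ffunE sg_wd.
by rewrite !ffunE; apply: H.
Qed.

Definition F' := [set L f | f in F].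

Lemma card_F' : #|F'| = #|F|.
Proof. apply: card_imset => f f' e; by rewrite -(RL f) e RL. Qed.

Lemma F'_free : induced_free P F'.
Proof.
move=> [phi [_ hin hle]]; apply: sat.1.
exists (fun x => R (phi x)).
have hL x : phi x = L (R (phi x)).
  by have /imsetP [f _ ->] := hin x; rewrite RL.
have hle' : forall x y, grid_le (R (phi x)) (R (phi y)) = (x <= y)%O.
  by move=> x y; rewrite -L_le -!hL.
split => //; first exact: copy_inj.
by move=> x; have /imsetP [f fF ->] := hin x; rewrite RL.
Qed.

Section G.
Variable g : grid t N.
Hypothesis gF : g \notin F'.

Definition S (p : 'I_N) := (sg p == i) || (sg p == j).
Lemma S0 : S (wd i). Proof. by rewrite /S sg_wd eqxx. Qed.

Lemma exmax : exists pm, S pm /\ forall p, S p -> (g p <= g pm)%N.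
Proof.
case: (@arg_maxnP _ (wd i) S (fun p => nat_of_ord (g p)) S0) => p Sp H.
by exists p.
Qed.
Lemma exmin : exists pm, S pm /\ forall p, S p -> (g pm <= g p)%N.
Proof.
case: (@arg_minnP _ (wd i) S (fun p => nat_of_ord (g p)) S0) => p Sp H.
by exists p.
Qed.

Lemma main_g : has_induced_copy P (g |: F').
Proof.
have [pM [SM HM]] := exmax.
have [pm [Sm Hm]] := exmin.
pose h : grid t n := [ffun l => if l == i then g pM else if l == j then g pm else g (wd l)].
have hi : h i = g pM by rewrite ffunE eqxx.
have hj : h j = g pm by rewrite ffunE eq_sym (negbTE nij) eqxx.
have ho l : l != i -> l != j -> h l = g (wd l).
  by move=> a b; rewrite ffunE (negbTE a) (negbTE b).
have nS p : ~~ S p -> wd (sg p) = p.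
  by rewrite /S negb_or => /andP [a _]; apply: wd_sg.
have fS f p : f \in F -> S p -> f (sg p) = f i.
  by move=> fF /orP [] /eqP ->; rewrite ?tw.
have le1 f : f \in F -> grid_le g (L f) = grid_le h f.
  move=> fF; apply/forallP/forallP => H l.
  - case: (eqVneq l i) => [->|li]; first by rewrite hi; have := H pM; rewrite ffunE fS.
    case: (eqVneq l j) => [->|lj].
      rewrite hj -(tw fF); apply: leq_trans (Hm _ SM) _.
      by have := H pM; rewrite ffunE fS.
    by rewrite ho //; have := H (wd l); rewrite ffunE sg_wd.
  - rewrite ffunE; case Sp: (S l).
      rewrite fS //; apply: leq_trans (HM _ Sp) _; by rewrite -hi.
    have [ni nj] : sg l != i /\ sg l != j.
      by move/negbT: Sp; rewrite /S negb_or => /andP [].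
    have e := nS l (negbT Sp); rewrite -{1}e -ho //; exact: H.
have le2 f : f \in F -> grid_le (L f) g = grid_le f h.
  move=> fF; apply/forallP/forallP => H l.
  - case: (eqVneq l i) => [->|li]; first by rewrite hi; have := H pM; rewrite ffunE fS.
    case: (eqVneq l j) => [->|lj].
      by rewrite hj -(tw fF); have := H pm; rewrite ffunE fS.
    by rewrite ho //; have := H (wd l); rewrite ffunE sg_wd.
  - rewrite ffunE; case Sp: (S l).
      rewrite fS // (tw fF); apply: leq_trans (Hm _ Sp); by rewrite -hj.
    have [ni nj] : sg l != i /\ sg l != j.
      by move/negbT: Sp; rewrite /S negb_or => /andP [].
    have e := nS l (negbT Sp); rewrite -{2}e -ho //; exact: H.
have hF : h \notin F.
  apply/negP => hF; apply/negP: gF; apply/negPn/imsetP; exists h => //.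
  have e := tw hF; rewrite hi hj in e.
  apply/ffunP => p; rewrite ffunE; case Sp: (S p).
    have -> : g p = g pM.
      by apply/val_inj/eqP; rewrite eqn_leq HM //= e Hm.
    by case/orP: Sp => /eqP ->; rewrite ?hi ?hj.
  have [ni nj] : sg p != i /\ sg p != j.
    by move/negbT: Sp; rewrite /S negb_or => /andP [].
  by rewrite -{1}(nS p (negbT Sp)) ho.
have [phi [_ hin hle]] := sat.2 h hF.
pose psi x := if phi x == h then g else L (phi x).
have hle' x y : grid_le (psi x) (psi y) = (x <= y)%O.
  rewrite -hle /psi.
  have mem z : phi z != h -> phi z \in F.
    by move=> nz; have := hin z; rewrite in_setU1 (negbTE nz).
  case: (eqVneq (phi x) h) => [->|nx]; case: (eqVneq (phi y) h) => [->|ny].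
  - by rewrite /grid_le; apply/forallP/forallP.
  - by rewrite le1 ?mem.
  - by rewrite le2 ?mem.
  - by rewrite L_le.
exists psi; split => //; first exact: copy_inj.
move=> x; rewrite /psi in_setU1; case: (eqVneq (phi x) h) => [_|nx]; first by rewrite eqxx.
have : phi x \in F by have := hin x; rewrite in_setU1 (negbTE nx).
by move=> fF; apply/orP; right; apply/imsetP; exists (phi x).
Qed.
End G.

Lemma dup_sat : exists F2 : {set grid t N}, induced_saturated P F2 /\ #|F2| = #|F|.
Proof.
exists F'; split; last exact: card_F'.
split; first exact: F'_free.
exact: main_g.
Qed.
End Dup.
Lemma twins t n (F : {set grid t n}) : (t ^ #|F| < n)%N ->
  exists i j : 'I_n, i != j /\ forall f, f \in F -> f i = f j.
Proof.
move=> H.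
pose c (l : 'I_n) : {ffun 'I_#|F| -> 'I_t} := [ffun k => (enum_val k : grid t n) l].
have : ~~ injectiveb c.
  apply/negP => /injectiveP /leq_card; rewrite card_ffun !card_ord; by rewrite leqNgt H.
case/injectivePn => i [j nij e]; exists i, j; split => // f fF.
move/ffunP: e => /(_ (enum_rank_in fF f)); rewrite /c !ffunE enum_rankK_in //.
Qed.

Lemma expn_Nat_pow a b : expn a b = Nat.pow a b.
Proof. by elim: b => //= b IH; rewrite expnS IH. Qed.

From Stdlib Require Import Reals.
From Stdlib Require Import Classical Lra.

Theorem mainTheorem7 (d : Order.disp_t) (P : finPOrderType d) (t : nat) :
  (2 <= t)%N ->
  (* sat^*([t]^n, P) = O(1) as n -> oo *)
  (exists C N : nat, forall n m : nat, (N <= n)%N -> embeds P t n ->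
      is_satstar P t n m -> (m <= C)%N)
  \/
  (* sat^*([t]^n, P) >= log_t n for all n (for which it is defined) *)
  (forall n m : nat, (1 <= n)%N -> embeds P t n -> is_satstar P t n m ->
      (ln (INR n) / ln (INR t) <= INR m)%R).
Proof.
move=> t2.
destruct (classic (exists n m, (1 <= n)%N /\ is_satstar P t n m /\ (expn t m < n)%N))
  as [[n0 [m0 [Hn [[[F0 [HF0 cF0]] _] Hlt]]]] | Hno].
- left; exists m0, n0 => n m hn _ [_ Hmin].
  rewrite -cF0 in Hlt; have [i [j [nij tw]]] := twins Hlt.
  have [F2 [s2 c2]] := dup_sat nij hn tw HF0.
  by rewrite -cF0 -c2; apply: Hmin.
- right => n m hn _ hs.
  have hle : (n <= expn t m)%N.
    rewrite leqNgt; apply/negP => h; apply: Hno; exists n, m; auto.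
  have Hn' : (INR n <= INR t ^ m)%R.
    by rewrite -pow_INR -expn_Nat_pow; apply: le_INR; apply/leP.
  have t1 : (1 < INR t)%R.
    by apply: (Rlt_le_trans _ 2); [lra | change 2%R with (INR 2); apply: le_INR; apply/leP].
  have lt0 : (0 < ln (INR t))%R by rewrite -ln_1; apply: ln_increasing; lra.
  have n0 : (0 < INR n)%R by apply: lt_0_INR; apply/ltP.
  have hl : (ln (INR n) <= ln (INR t ^ m))%R.
    case: (Rle_lt_or_eq_dec _ _ Hn') => [h|->]; last by apply: Rle_refl.
    by apply: Rlt_le; apply: ln_increasing.
  rewrite ln_pow in hl; last lra.
  apply: (Rmult_le_reg_r (ln (INR t))) => //.
  replace (ln (INR n) / ln (INR t) * ln (INR t))%R with (ln (INR n)) by (field; lra).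
  exact: hl.
Qed.
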